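(* Let $G$ be a path or a cycle and let $I_s,I_t$ be independent sets of $G$. Then the minimum length of a reconfiguration sequence from $I_s$ to $I_t$ is exactly $\mathrm{cc}(I_s\triangle I_t)$.
   Context: All graphs are finite, simple and undirected. For $V'\subseteq V(G)$, $\mathrm{cc}(V')$ denotes the number of connected components of the induced subgraph $G[V']$. A reconfiguration sequence from $I_s$ to $I_t$ of length $\ell$ is a sequence $\langle I_s=I_0,\dots,I_\ell=I_t\rangle$ of independent sets of $G$ such that $G[I_{i-1}\triangle I_i]$ is connected for every $i\in\{1,\dots,\ell\}$. *)

(* Defs.v *)
From mathcomp Require Import all_boot.
Set Implicit Arguments. Unset Strict Implicit. Unset Printing Implicit Defensive.


Definition simple_graph (T : finType) (e : rel T) : Prop :=
  symmetric e /\ irreflexive e.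

Definition path_rel (n : nat) : rel 'I_n :=
  fun i j => (i.+1 == j :> nat) || (j.+1 == i :> nat).

(* The cycle C_n on vertices 0..n-1 (meaningful as a simple graph for n >= 3) *)
Definition cycle_rel (n : nat) : rel 'I_n :=
  fun i j => (i.+1 %% n == j :> nat) || (j.+1 %% n == i :> nat).

Definition isomorphic_to (T : finType) (e : rel T) (n : nat) (r : rel 'I_n) : Prop :=
  exists f : 'I_n -> T, bijective f /\ forall i j, e (f i) (f j) = r i j.

Definition is_path_graph (T : finType) (e : rel T) : Prop :=
  exists n, @isomorphic_to T e n (@path_rel n).

Definition is_cycle_graph (T : finType) (e : rel T) : Prop :=
  exists n, 3 <= n /\ @isomorphic_to T e n (@cycle_rel n).

Definition independent (T : finType) (e : rel T) (I : {set T}) : bool :=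
  [forall x in I, forall y in I, ~~ e x y].

Definition induced_rel (T : finType) (e : rel T) (S : {set T}) : rel T :=
  fun x y => [&& x \in S, y \in S & e x y].

Definition connected_induced (T : finType) (e : rel T) (S : {set T}) : bool :=
  (S != set0) && [forall x in S, forall y in S, connect (induced_rel e S) x y].

Definition cc (T : finType) (e : rel T) (S : {set T}) : nat :=
  #|[set [set y in S | connect (induced_rel e S) x y] | x in S]|.

Definition symdiff (T : finType) (A B : {set T}) : {set T} :=
  (A :\: B) :|: (B :\: A).

(* [:: I_1; ...; I_l] is such that <Is = I_0, I_1, ..., I_l = It> is a
   reconfiguration sequence of length l = size s. *)
Definition reconf_seq (T : finType) (e : rel T) (Is It : {set T})
    (s : seq {set T}) : bool :=
  [&& all (independent e) (Is :: s),
      path (fun A B => connected_induced e (symdiff A B)) Is s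
    & last Is s == It].

(* Main.v *)
Require Import Defs.
From mathcomp Require Import all_boot zify.
Set Implicit Arguments. Unset Strict Implicit. Unset Printing Implicit Defensive.

Lemma in_sd (T : finType) (A B : {set T}) x : (x \in symdiff A B) = ((x \in A) != (x \in B)).
Proof. by rewrite /symdiff !inE; case: (x \in A); case: (x \in B). Qed.

Lemma sdK (T : finType) (A B : {set T}) : symdiff A (symdiff A B) = B.
Proof. by apply/setP => x; rewrite !in_sd; case: (x \in A); case: (x \in B). Qed.

Lemma sdd (T : finType) (A : {set T}) : symdiff A A = set0.
Proof. by apply/setP => x; rewrite in_sd inE; case: (x \in A). Qed.

Lemma induced_sym (T : finType) (e : rel T) (S : {set T}) : symmetric e -> symmetric (induced_rel e S).
Proof. by move=> es x y; rewrite /induced_rel es andbCA. Qed.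

Definition cls (T : finType) (e : rel T) (S : {set T}) x :=
  [set y in S | connect (induced_rel e S) x y].

Lemma in_cls (T : finType) (e : rel T) (S : {set T}) a x :
  (x \in cls e S a) = (x \in S) && connect (induced_rel e S) a x.
Proof. by rewrite inE. Qed.

Lemma cls_connected (T : finType) (e : rel T) (S : {set T}) a : symmetric e -> a \in S ->
  connected_induced e (cls e S a).
Proof.
move=> es aS; have cs := sym_connect_sym (induced_sym S es).
apply/andP; split.
  by apply/set0Pn; exists a; rewrite inE aS connect0.
apply/forallP => x; apply/implyP => xC; apply/forallP => y; apply/implyP => yC.
move: xC yC; rewrite !inE => /andP [xS ax] /andP [yS ay].
have : connect (induced_rel e S) x y.
  by apply: connect_trans ay; rewrite cs.
case/connectP => p pth ->.
elim: p x xS ax pth => [|z p IH] x xS ax /=; first by rewrite connect0.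
case/andP => /andP [_ /andP [zS exz]] pth.
have az : connect (induced_rel e S) a z.
  by apply: connect_trans ax (connect1 _); rewrite /induced_rel xS zS.
apply: connect_trans (connect1 _) (IH z zS az pth).
by rewrite /induced_rel !inE xS zS ax az exz.
Qed.


Lemma indepP (T : finType) (e : rel T) (I : {set T}) :
  reflect (forall x y, x \in I -> y \in I -> ~~ e x y) (independent e I).
Proof.
apply: (iffP idP).
  by move=> /forallP H x y xI yI; move: (H x); rewrite xI /= => /forallP /(_ y); rewrite yI.
move=> H; apply/forallP => x; apply/implyP => xI; apply/forallP => y; apply/implyP => yI.
exact: H.
Qed.

Lemma count_le1 (T : eqType) (p : pred T) (s : seq T) :
  uniq s -> {in s &, forall x y, p x -> p y -> x = y} -> count p s <= 1.
Proof.
move=> us H; case: (boolP (has p s)) => [/hasP [y ys py]|]; last first.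
  by rewrite has_count; case: (count p s).
rewrite (@eq_in_count _ _ (pred1 y)) ?count_uniq_mem ?leq_b1 //.
move=> z zs /=; apply/idP/eqP => [pz|->//]; exact: H.
Qed.

Lemma fold_mem (T : finType) (cs : seq {set T}) (A : {set T}) (x : T) :
  count (fun C : {set T} => x \in C) cs <= 1 ->
  (x \in foldl (@symdiff T) A cs) = ((x \in A) != has (fun C : {set T} => x \in C) cs).
Proof.
elim: cs A => [|C cs IH] A /=; first by case: (x \in A).
move=> H; rewrite IH; last exact: leq_trans (leq_addl _ _) H.
rewrite in_sd; case xC: (x \in C) H => /= H; last by case: (x \in A).
have c0 : count (fun C : {set T} => x \in C) cs = 0 by move: H; case: count.
rewrite has_count c0 /=.
by case: (x \in A).
Qed.

Lemma scan_all (T1 T2 : Type) (f : T1 -> T2 -> T1) (P : pred T1) A cs :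
  (forall k, P (foldl f A (take k cs))) -> all P (A :: scanl f A cs).
Proof.
elim: cs A => [|c cs IH] A H /=; first by move: (H 0) => /= ->.
move: (H 0) => /= ->; exact: IH (f A c) (fun k => H k.+1).
Qed.

Lemma scan_last (T1 T2 : Type) (f : T1 -> T2 -> T1) A cs :
  last A (scanl f A cs) = foldl f A cs.
Proof. by elim: cs A => [|c cs IH] A //=. Qed.

Lemma scan_path (T : finType) (e : rel T) (A : {set T}) cs :
  (forall C, C \in cs -> connected_induced e C) ->
  path (fun X Y => connected_induced e (symdiff X Y)) A (scanl (@symdiff T) A cs).
Proof.
elim: cs A => [|c cs IH] A H //=.
rewrite sdK H ?mem_head //=; apply: IH => C Cs; apply: H; by rewrite inE Cs orbT.
Qed.

Lemma upper (T : finType) (e : rel T) (Is It : {set T}) :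
  symmetric e -> independent e Is -> independent e It ->
  exists s : seq {set T}, reconf_seq e Is It s /\ size s = cc e (symdiff Is It).
Proof.
move=> es iIs iIt.
set S := symdiff Is It.
set P := [set cls e S x | x in S].
have cs := sym_connect_sym (induced_sym S es).
have clsS : forall a x, x \in cls e S a -> x \in S by move=> a x; rewrite in_cls => /andP [].
have clsE : forall a x, x \in cls e S a -> cls e S a = cls e S x.
  move=> a x; rewrite in_cls => /andP [_ ax]; apply/setP => y; rewrite !in_cls.
  by rewrite (same_connect cs ax).
have cnt : forall x k, count (fun C : {set T} => x \in C) (take k (enum P)) <= 1.
  move=> x k; apply: leq_trans (_ : count (fun C : {set T} => x \in C) (enum P) <= 1).
    by rewrite -{2}(cat_take_drop k (enum P)) count_cat leq_addr.
  apply: count_le1; first exact: enum_uniq.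
  move=> C D; rewrite !mem_enum => /imsetP [a _ ->] /imsetP [b _ ->] xa xb.
  by rewrite (clsE _ _ xa) (clsE _ _ xb).
have hasE : forall x, has (fun C : {set T} => x \in C) (enum P) = (x \in S).
  move=> x; apply/hasP/idP => [[C]|xS].
    by rewrite mem_enum => /imsetP [a _ ->]; apply: clsS.
  exists (cls e S x); first by rewrite mem_enum; apply/imsetP; exists x.
  by rewrite in_cls xS connect0.
exists (scanl (@symdiff T) Is (enum P)); split; last by rewrite size_scanl -cardE.
apply/and3P; split.
- apply: scan_all => k; apply/indepP => x y.
  rewrite !fold_mem ?cnt //.
  have hx : forall z, has (fun C : {set T} => z \in C) (take k (enum P)) ->
     (z \in S) /\ (forall w, z \in S -> w \in S -> e z w -> has (fun C : {set T} => w \in C) (take k (enum P))).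
    move=> z /hasP [C Ck zC]; have : C \in enum P by apply: mem_take Ck.
    rewrite mem_enum => /imsetP [a aS eC]; split; first by apply: (clsS a); rewrite -eC.
    move=> w zS wS ezw; apply/hasP; exists C => //.
    move: zC; rewrite eC !in_cls => /andP [_ az]; rewrite wS /=.
    by apply: connect_trans az (connect1 _); rewrite /induced_rel zS wS ezw.
  have key : forall x y, (x \in Is) != has (fun C : {set T} => x \in C) (take k (enum P)) ->
      (y \in Is) != has (fun C : {set T} => y \in C) (take k (enum P)) ->
      has (fun C : {set T} => x \in C) (take k (enum P)) ->
      ~~ has (fun C : {set T} => y \in C) (take k (enum P)) -> ~~ e x y.
    move=> x0 y0 hx0 hy0 Hx Hy; apply/negP => exy.
    have [x0S Hw] := hx x0 Hx.
    have x0It : x0 \in It by move: hx0 x0S; rewrite Hx in_sd; case: (x0 \in Is); case: (x0 \in It).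
    have yI : y0 \in Is by move: hy0; rewrite (negbTE Hy); case: (y0 \in Is).
    case y0S: (y0 \in S).
      by move: Hy; rewrite (Hw y0 x0S y0S exy).
    have y0It : y0 \in It by move: y0S; rewrite in_sd yI => /negbT; rewrite negbK.
    by move/indepP: iIt => /(_ x0 y0 x0It y0It); rewrite exy.
  move=> hx0 hy0.
  case Hx: (has (fun C : {set T} => x \in C) (take k (enum P)));
  case Hy: (has (fun C : {set T} => y \in C) (take k (enum P))).
  + have [xS _] := hx x Hx; have [yS _] := hx y Hy.
    have xIt : x \in It by move: hx0 xS; rewrite Hx in_sd; case: (x \in Is); case: (x \in It).
    have yIt : y \in It by move: hy0 yS; rewrite Hy in_sd; case: (y \in Is); case: (y \in It).
    apply/negP => exy.
    by move/indepP: iIt => /(_ x y xIt yIt); rewrite exy.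
  + by apply: key => //; rewrite Hy.
  + by rewrite es; apply: key => //; rewrite Hx.
  + move: hx0 hy0; rewrite Hx Hy; case xI: (x \in Is); case yI: (y \in Is) => // _ _.
    by move/indepP: iIs => /(_ x y xI yI).
- apply: scan_path => C; rewrite mem_enum => /imsetP [a aS ->].
  exact: cls_connected.
- rewrite scan_last; apply/eqP/setP => x.
  rewrite fold_mem; last by rewrite -(take_size (enum P)) cnt.
  by rewrite hasE in_sd; case: (x \in Is); case: (x \in It).
Qed.

Definition prv (m k : nat) := if k == 0 then m.-1 else k.-1.

Definition xs (T : finType) n (f : 'I_n -> T) (S : {set T}) (k : nat) : bool :=
  if @insub _ (fun k => k < n) 'I_n k is Some i then f i \in S else false.

Lemma xs_g (T : finType) n (f : 'I_n -> T) g S z : cancel g f -> xs f S (g z) = (z \in S).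
Proof. by move=> gK; rewrite /xs valK gK. Qed.

Lemma xs_big (T : finType) n (f : 'I_n -> T) S k : n <= k -> xs f S k = false.
Proof. by move=> nk; rewrite /xs insubF // ltnNge nk. Qed.

Lemma xs_ex (T : finType) n (f : 'I_n -> T) g S k : cancel f g -> xs f S k ->
  exists z, z \in S /\ (g z : nat) = k.
Proof.
move=> fK; rewrite /xs; case: insubP => [u _ uk|//] fu.
by exists (f u); rewrite fK uk.
Qed.

Definition Tn m (x : nat -> bool) := count (fun k => x k != x (prv m k)) (iota 0 m).
Definition st m (x : nat -> bool) := count (fun k => x k && ~~ x (prv m k)) (iota 0 m).
Definition en m (x : nat -> bool) := count (fun k => ~~ x k && x (prv m k)) (iota 0 m).

Lemma count_add (p q r : pred nat) s : (forall k, r k + q k = p k :> nat) ->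
  count r s + count q s = count p s.
Proof.
move=> H; elim: s => [|a s IH] //=; rewrite -H -IH; lia.
Qed.

Lemma count_le_add (p q r : pred nat) s : (forall k, r k <= p k + q k) ->
  count r s <= count p s + count q s.
Proof.
move=> H; elim: s => [|a s IH] //=; have := H a; lia.
Qed.

Lemma Tn_split m x : Tn m x = st m x + en m x.
Proof. by rewrite /Tn (count_add (p := fun k => x k != x (prv m k))) // => k; case: (x k); case: (x (prv m k)). Qed.

Lemma map_prv m : 0 < m -> map (prv m) (iota 0 m) = m.-1 :: iota 0 m.-1.
Proof.
case: m => [//|m] _ /=; congr (_ :: _).
have H : forall a M, map (prv M) (iota a.+1 m) = iota a m.
  by elim: m => [|m IH] a M //=; rewrite IH.
exact: H.
Qed.

Lemma st_en m x : 0 < m -> st m x = en m x.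
Proof.
move=> m0.
have e1 : count (fun k => x (prv m k)) (iota 0 m) = count x (iota 0 m).
  rewrite -(count_map (prv m) x) map_prv //.
  by case: m m0 => [//|m] _; rewrite -[in RHS]addn1 iotaD count_cat add0n /= addn0 addnC.
have h1 := count_add (p := fun k => x k || x (prv m k)) (q := fun k => ~~ x k && x (prv m k))
   (r := fun k => x k) (iota 0 m).
have h2 := count_add (p := fun k => x k || x (prv m k)) (q := fun k => x k && ~~ x (prv m k))
   (r := fun k => x (prv m k)) (iota 0 m).
rewrite /st /en.
have := h1 (fun k => ltac:(by case: (x k); case: (x (prv m k)))).
have := h2 (fun k => ltac:(by case: (x k); case: (x (prv m k)))).
rewrite e1 => <-; by move/eqP; rewrite eqn_add2l => /eqP.
Qed.

Lemma Tn_sub m x y z : (forall k, z k = (x k != y k)) -> Tn m z <= Tn m x + Tn m y.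
Proof.
move=> H; apply: count_le_add => k; rewrite !H.
by case: (x k); case: (y k); case: (x (prv m k)); case: (y (prv m k)).
Qed.

Lemma card_iota n (P : pred nat) : #|[set i : 'I_n | P i]| = count P (iota 0 n).
Proof.
rewrite cardE /enum_mem size_filter -enumT -val_enum_ord count_map.
by apply: eq_count => i /=; rewrite inE.
Qed.

Definition sset (T : finType) n m (f : 'I_n -> T) (g : T -> 'I_n) (S : {set T}) :=
  [set z in S | ~~ xs f S (prv m (g z))].

Lemma st_card (T : finType) n m (f : 'I_n -> T) g S :
  cancel f g -> cancel g f -> n <= m -> st m (xs f S) = #|sset m f g S|.
Proof.
move=> fK gK nm; rewrite /st -(subnKC nm) iotaD count_cat add0n.
rewrite (@eq_in_count _ _ pred0 (iota n _)); last first.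
  by move=> k; rewrite mem_iota => /andP [nk _]; rewrite xs_big.
rewrite count_pred0 addn0 subnKC //.
have -> : sset m f g S = f @: [set i : 'I_n | xs f S i && ~~ xs f S (prv m i)].
  apply/setP => z; apply/idP/imsetP.
    rewrite inE => /andP [zS nz]; exists (g z); last by rewrite gK.
    by rewrite inE xs_g // zS.
  by case=> i; rewrite !inE => /andP [xi nx] ->; rewrite fK -(xs_g S (f i) gK) fK xi.
rewrite card_imset; last exact: can_inj fK.
by rewrite (card_iota n (fun k => xs f S k && ~~ xs f S (prv m k))).
Qed.

Lemma prv_cases m k : (k = 0 /\ prv m k = m.-1) \/ (0 < k /\ prv m k = k.-1).
Proof. by rewrite /prv; case: k => [|k]; [left|right]. Qed.

Lemma sset_ne (T : finType) n m (f : 'I_n -> T) g (C : {set T}) z y :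
  cancel g f -> z \in sset m f g C -> y \in C -> (g y : nat) <> prv m (g z).
Proof.
move=> gK; rewrite inE => /andP [_ nz] yC E; move: nz; by rewrite -E xs_g // yC.
Qed.

Lemma L2core (T : finType) (e : rel T) n m (f : 'I_n -> T) g (C : {set T}) z1 z2 :
  cancel f g -> cancel g f -> n <= m ->
  (forall z u, e z u -> (g z : nat) = prv m (g u) \/ (g u : nat) = prv m (g z)) ->
  z1 \in sset m f g C -> z2 \in sset m f g C -> g z1 < g z2 ->
  ~~ connect (induced_rel e C) z1 z2.
Proof.
move=> fK gK nm Hadj s1 s2 lt12; apply/negP; case/connectP => p pth lst.
have z1C : z1 \in C by move: s1; rewrite inE => /andP [].
set Q := fun x => (x \in C) && (g z1 <= g x < (g z2).-1).
have Q1 : Q z1.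
  rewrite /Q z1C leqnn /=.
  have := sset_ne gK s2 z1C; case: (prv_cases m (g z2)) => [[h1 h2]|[h1 h2]]; lia.
have step : forall x y, Q x -> induced_rel e C x y -> Q y.
  move=> x y /andP [xC /andP [le1 lt2]] /and3P [_ yC exy].
  rewrite /Q yC /=.
  have n1 := sset_ne gK s1 yC; have n2 := sset_ne gK s2 yC.
  have := ltn_ord (g x); have := ltn_ord (g y); have := ltn_ord (g z2).
  case: (Hadj _ _ exy) => E;
  case: (prv_cases m (g x)) => [[h1 h2]|[h1 h2]];
  case: (prv_cases m (g y)) => [[h3 h4]|[h3 h4]];
  case: (prv_cases m (g z1)) => [[h5 h6]|[h5 h6]];
  case: (prv_cases m (g z2)) => [[h7 h8]|[h7 h8]]; lia.
have gen : forall q x, Q x -> path (induced_rel e C) x q -> Q (last x q).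
  elim=> [|y q IH] x Qx //= /andP [rxy pth'].
  exact: IH (step _ _ Qx rxy) pth'.
have := gen p z1 Q1 pth.
rewrite -lst /Q; lia.
Qed.

Lemma conn_get (T : finType) (e : rel T) (C : {set T}) x y :
  connected_induced e C -> x \in C -> y \in C -> connect (induced_rel e C) x y.
Proof.
case/andP => _ /forallP H xC yC; move: (H x); rewrite xC /= => /forallP /(_ y).
by rewrite yC.
Qed.

Lemma L2 (T : finType) (e : rel T) n m (f : 'I_n -> T) g (C : {set T}) :
  cancel f g -> cancel g f -> n <= m ->
  (forall z u, e z u -> (g z : nat) = prv m (g u) \/ (g u : nat) = prv m (g z)) ->
  connected_induced e C -> #|sset m f g C| <= 1.
Proof.
move=> fK gK nm Hadj cC; apply/card_le1_eqP => x y xs ys.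
have xC : x \in C by move: xs; rewrite inE => /andP [].
have yC : y \in C by move: ys; rewrite inE => /andP [].
case: (ltngtP (g x) (g y)) => H.
- by move: (L2core fK gK nm Hadj xs ys H); rewrite conn_get.
- by move: (L2core fK gK nm Hadj ys xs H); rewrite conn_get.
- by apply: (can_inj gK); apply: val_inj.
Qed.

Lemma Bwalk (T : finType) (e : rel T) n m (f : 'I_n -> T) g (S : {set T}) :
  cancel f g -> cancel g f ->
  (forall z u, (g z : nat) = prv m (g u) -> e z u) ->
  forall q z, z \in S -> (g z : nat) = q ->
  (exists w, w \in sset m f g S /\ connect (induced_rel e S) w z) \/
  (forall t, g t <= q -> t \in S /\ connect (induced_rel e S) t z).
Proof.
move=> fK gK Hadj; elim=> [|q IH] z zS gz.
  right => t; rewrite leqn0 => /eqP gt.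
  have -> : t = z by apply: (can_inj gK); apply: val_inj; rewrite /= gt gz.
  by rewrite zS connect0.
case: (boolP (xs f S (prv m (g z)))) => [xw|nx]; last first.
  by left; exists z; rewrite inE zS nx connect0.
have [w [wS gw]] := xs_ex fK xw.
have gwq : (g w : nat) = q by rewrite gw gz.
have rwz : induced_rel e S w z by rewrite /induced_rel wS zS Hadj.
case: (IH w wS gwq) => [[w' [w's cw]]|H].
  by left; exists w'; split => //; apply: connect_trans cw (connect1 rwz).
right => t; rewrite leq_eqVlt => /orP [/eqP gt|].
  have -> : t = z by apply: (can_inj gK); apply: val_inj; rewrite /= gt gz.
  by rewrite zS connect0.
rewrite ltnS => /H [tS ct]; split => //; exact: connect_trans ct (connect1 rwz).
Qed.

Lemma WD (T : finType) (e : rel T) n m (f : 'I_n -> T) g (S : {set T}) y :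
  cancel f g -> cancel g f -> n <= m ->
  (forall z u, (g z : nat) = prv m (g u) -> e z u) -> y \in S ->
  (exists w, w \in sset m f g S /\ connect (induced_rel e S) w y) \/
  (S = setT /\ forall t, connect (induced_rel e S) t y).
Proof.
move=> fK gK nm Hadj yS.
case: (Bwalk fK gK Hadj yS (erefl _)) => [|H]; first by left.
have n0 : 0 < n by apply: leq_ltn_trans (ltn_ord (g y)).
set u := f (Ordinal n0).
have gu : (g u : nat) = 0 by rewrite /u fK.
have [uS cu] := H u (ltac:(by rewrite gu)).
case: (boolP (xs f S (prv m (g u)))) => [xw|nx]; last first.
  by left; exists u; rewrite inE uS nx.
have [z [zS gz]] := xs_ex fK xw.
have rzu : induced_rel e S z u by rewrite /induced_rel zS uS Hadj.
have czy : connect (induced_rel e S) z y by apply: connect_trans (connect1 rzu) cu.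
case: (Bwalk fK gK Hadj zS (erefl _)) => [[w [ws cw]]|H2].
  by left; exists w; split => //; apply: connect_trans cw czy.
have Ht : forall t, g t <= g z.
  move=> t; rewrite gz gu /prv /=; have := ltn_ord (g t); lia.
right; split.
  by apply/setP => t; rewrite inE; case: (H2 t (Ht t)).
by move=> t; case: (H2 t (Ht t)) => _ ct; apply: connect_trans ct czy.
Qed.

Lemma L1 (T : finType) (e : rel T) n m (f : 'I_n -> T) g (S : {set T}) :
  symmetric e -> cancel f g -> cancel g f -> n <= m ->
  (forall z u, (g z : nat) = prv m (g u) -> e z u) ->
  cc e S <= #|sset m f g S| \/ cc e S <= 1.
Proof.
move=> es fK gK nm Hadj.
have cs : connect_sym (induced_rel e S).
  by apply: sym_connect_sym => x y; rewrite /induced_rel es andbCA.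
set cl := fun x => [set y in S | connect (induced_rel e S) x y].
have ccE : cc e S = #|[set cl x | x in S]| by [].
have clE : forall x y, connect (induced_rel e S) x y -> cl x = cl y.
  by move=> x y cxy; apply/setP => t; rewrite !inE (same_connect cs cxy).
case: (boolP [forall y in S, exists w in sset m f g S, connect (induced_rel e S) w y]).
  move=> /forallP H; left; rewrite ccE.
  apply: leq_trans (leq_imset_card cl (sset m f g S)); apply: subset_leq_card.
  apply/subsetP => C /imsetP [x xS ->]; move: (H x); rewrite xS /= => /existsP [w /andP [ws cw]].
  by apply/imsetP; exists w => //; rewrite (clE _ _ cw).
move/forallPn => [y]; rewrite negb_imply => /andP [yS /existsPn Hn].
case: (WD fK gK nm Hadj yS) => [[w [ws cw]]|[_ Hall]].
  by move: (Hn w); rewrite ws cw.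
right; rewrite ccE; apply: leq_trans (_ : #|[set cl y]| <= 1); last by rewrite cards1.
apply: subset_leq_card; apply/subsetP => C /imsetP [x xS ->].
by rewrite (clE _ _ (Hall x)) inE.
Qed.





Lemma xs_sd (T : finType) n (f : 'I_n -> T) (A B : {set T}) k :
  xs f (symdiff A B) k = (xs f A k != xs f B k).
Proof. by rewrite /xs; case: insub => [i|//]; rewrite in_sd. Qed.

Lemma Tn_conn (T : finType) (e : rel T) n m (f : 'I_n -> T) g (C : {set T}) :
  cancel f g -> cancel g f -> n <= m -> 0 < m ->
  (forall z u, e z u -> (g z : nat) = prv m (g u) \/ (g u : nat) = prv m (g z)) ->
  connected_induced e C -> Tn m (xs f C) <= 2.
Proof.
move=> fK gK nm m0 Hadj cC; rewrite Tn_split -st_en // (st_card _ fK gK nm).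
by have := L2 fK gK nm Hadj cC; lia.
Qed.

Lemma Tn_path (T : finType) (e : rel T) n m (f : 'I_n -> T) g (Is : {set T}) :
  cancel f g -> cancel g f -> n <= m -> 0 < m ->
  (forall z u, e z u -> (g z : nat) = prv m (g u) \/ (g u : nat) = prv m (g z)) ->
  forall s A, path (fun X Y => connected_induced e (symdiff X Y)) A s ->
  Tn m (xs f (symdiff Is (last A s))) <= Tn m (xs f (symdiff Is A)) + 2 * size s.
Proof.
move=> fK gK nm m0 Hadj; elim=> [|B s IH] A /=; first by rewrite addn0.
case/andP => cAB pth; apply: leq_trans (IH B pth) _.
have := @Tn_sub m (xs f (symdiff Is A)) (xs f (symdiff A B)) (xs f (symdiff Is B)).
have := Tn_conn fK gK nm m0 Hadj cAB.
have H : forall k, xs f (symdiff Is B) k = (xs f (symdiff Is A) k != xs f (symdiff A B) k).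
  by move=> k; rewrite !xs_sd; case: (xs f Is k); case: (xs f A k); case: (xs f B k).
move=> h1 /(_ H) h2; lia.
Qed.

Lemma lower (T : finType) (e : rel T) n m (f : 'I_n -> T) g (Is It : {set T}) s :
  symmetric e -> cancel f g -> cancel g f -> n <= m -> 0 < m ->
  (forall z u, (g z : nat) = prv m (g u) -> e z u) ->
  (forall z u, e z u -> (g z : nat) = prv m (g u) \/ (g u : nat) = prv m (g z)) ->
  reconf_seq e Is It s -> cc e (symdiff Is It) <= size s.
Proof.
move=> es fK gK nm m0 Ha1 Ha2 /and3P [_ pth /eqP lst].
have h := Tn_path Is fK gK nm m0 Ha2 pth; rewrite lst in h.
have z0 : Tn m (xs f (symdiff Is Is)) = 0.
  rewrite /Tn (@eq_count _ _ pred0) ?count_pred0 // => k /=.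
  by rewrite !xs_sd; case: (xs f Is k); case: (xs f Is (prv m k)).
rewrite z0 add0n Tn_split -st_en // (st_card _ fK gK nm) in h.
case: (L1 (symdiff Is It) es fK gK nm Ha1) => H; first by lia.
case: s pth lst h => [|B s] pth lst h; last by apply: leq_trans H _.
rewrite /= in lst; rewrite -lst sdd /cc.
by rewrite imset0 cards0.
Qed.

Lemma modS_cases a n : a < n -> (a.+1 < n /\ a.+1 %% n = a.+1) \/ (a.+1 = n /\ a.+1 %% n = 0).
Proof.
move=> an; case: (ltngtP a.+1 n) => h.
- by left; rewrite modn_small.
- lia.
- by right; rewrite h modnn.
Qed.

Theorem theorem29 (T : finType) (e : rel T) (Is It : {set T}) :
  simple_graph e ->
  (is_path_graph e \/ is_cycle_graph e) ->
  independent e Is -> independent e It ->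
  (exists s : seq {set T}, reconf_seq e Is It s /\ size s = cc e (symdiff Is It)) /\
  (forall s : seq {set T}, reconf_seq e Is It s -> cc e (symdiff Is It) <= size s).
Proof.
move=> [es _] G iIs iIt; split; first exact: upper.
move=> s rs.
case: G => [[n [f [[g fK gK] He]]]|[n [n3 [f [[g fK gK] He]]]]].
- have He' : forall z u, e z u = path_rel (g z) (g u).
    by move=> z u; rewrite -He !gK.
  apply: (lower (m := n.+1) es fK gK (leqnSn n) (ltn0Sn n) _ _ rs).
  + move=> z u h; rewrite He' /path_rel; apply/orP; left; apply/eqP.
    have := ltn_ord (g z); have := ltn_ord (g u).
    case: (prv_cases n.+1 (g u)) h => [[h1 h2]|[h1 h2]] h; lia.
  + move=> z u; rewrite He' /path_rel => /orP [/eqP h|/eqP h];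
    have := ltn_ord (g z); have := ltn_ord (g u);
    case: (prv_cases n.+1 (g u)) => [[h1 h2]|[h1 h2]];
    case: (prv_cases n.+1 (g z)) => [[h3 h4]|[h3 h4]]; lia.
- have He' : forall z u, e z u = cycle_rel (g z) (g u).
    by move=> z u; rewrite -He !gK.
  have n0 : 0 < n by apply: leq_trans n3.
  apply: (lower (m := n) es fK gK (leqnn n) n0 _ _ rs).
  + move=> z u h; rewrite He' /cycle_rel; apply/orP; left; apply/eqP.
    have := ltn_ord (g z); have := ltn_ord (g u).
    case: (modS_cases (ltn_ord (g z))) => [[h5 h6]|[h5 h6]]; rewrite h6;
    case: (prv_cases n (g u)) h => [[h1 h2]|[h1 h2]] h; lia.
  + move=> z u; rewrite He' /cycle_rel => /orP [/eqP h|/eqP h];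
    have := ltn_ord (g z); have := ltn_ord (g u);
    case: (modS_cases (ltn_ord (g z))) => [[h5 h6]|[h5 h6]]; rewrite ?h6 in h;
    case: (modS_cases (ltn_ord (g u))) => [[h7 h8]|[h7 h8]]; rewrite ?h8 in h;
    case: (prv_cases n (g u)) => [[h1 h2]|[h1 h2]];
    case: (prv_cases n (g z)) => [[h3 h4]|[h3 h4]]; lia.
Qed.
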